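(* Let $(G,\mathbf p)$ be a framework (with $\mathbf p$ pinned) and let $E$ be a stiff-bar energy at $\mathbf p$. A trajectory $\mathbf p(t)$ at $\mathbf p$ is a $(j,k)$-flex of $(G,\mathbf p)$ if and only if it is a $(j,2k)$ $E$-flex. Furthermore, $\mathbf p(t)$ is a $(j,2k)$ $E$-flex if and only if it is a $(j,2k+1)$ $E$-flex.
   Context: Fix a dimension $d$. A configuration is $\mathbf p=(\mathbf p_1,\dots,\mathbf p_n)$, $\mathbf p_i\in\mathbb R^d$; a framework $(G,\mathbf p)$ consists of a graph $G$ on $\{1,\dots,n\}$ and a configuration with $\mathbf p_i\ne\mathbf p_j$ for every edge $ij$. A configuration $\mathbf q$ is in $\ell$-pinned position if $\mathbf q_1=0$ and, for $2\le i\le\ell+1$, $\mathbf q_i\in\mathrm{span}(e_1,\dots,e_{i-1})$; these form a linear space. If $\mathbf p$ has $\ell$-dimensional affine span, it is pinned if $\mathbf p_1,\dots,\mathbf p_{\ell+1}$ are affinely independent and $\mathbf p$ is in $\ell$-pinned position. Throughout, $\mathbf p$ is pinned with $\ell$-dimensional affine span, and all trajectories are $\ell$-pinned. A trajectory at $\mathbf p$ is an analytic non-constant map $t\mapsto\mathbf p(t)$ into $\ell$-pinned configuration space, $t\in[0,\varepsilon]$, with $\mathbf p(0)=\mathbf p$. A $C^k$ function $\varphi(t)$ is $k$-vanishing if $\varphi^{(i)}(0)=0$ for $1\le i\le k$, and $k$-active if $(k-1)$-vanishing but not $k$-vanishing. With $\mathbf m(\mathbf q)=(|\mathbf q_i-\mathbf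 q_j|^2)_{ij\in E(G)}$, a $(j,k)$-flex is a $j$-active trajectory with $\mathbf m(\mathbf p(t))$ $k$-vanishing. For a function $f$ on $\ell$-pinned configuration space analytic near $\mathbf p$, a $(j,k)$ $f$-flex is a $j$-active trajectory $\mathbf p(t)$ at $\mathbf p$ with $f(\mathbf p(t))$ $k$-vanishing; an $E$-flex is an $f$-flex with $f=E$. A stiff-bar energy at $\mathbf p$ is $E(\mathbf q)=\sum_{ij\in E(G)}E_{ij}(|\mathbf q_i-\mathbf q_j|)$, where each $E_{ij}:\mathbb R\to\mathbb R$ is analytic at $d_{ij}=|\mathbf p_i-\mathbf p_j|\ne0$, has a strict local minimum at $d_{ij}$, and $E_{ij}''(d_{ij})>0$. *)

(* Defs.v *)
From Stdlib Require Import Reals List Lra.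
From Coquelicot Require Import Coquelicot.
Open Scope R_scope.

(* Points are indexed 0..n-1 (point i of the paper is index i-1),
   coordinates 0..d-1 (e_{c+1} of the paper is coordinate c).
   A configuration is a function (point index) -> (coordinate) -> R;
   only the values with indices < n and coordinates < d are meaningful. *)
Definition point := nat -> R.
Definition config := nat -> point.

Fixpoint sumn_R (m : nat) (f : nat -> R) : R :=
  match m with
  | O => 0
  | S m' => sumn_R m' f + f m'
  end.

Definition sqdist (d : nat) (x y : point) : R :=
  sumn_R d (fun c => (x c - y c) ^ 2).
Definition dist (d : nat) (x y : point) : R := sqrt (sqdist d x y).

Definition simple_graph (n : nat) (E : list (nat * nat)) : Prop :=
  NoDup E /\ forall e, In e E -> (fst e < snd e)%nat /\ (snd e < n)%nat.

Definition framework (n d : nat) (E : list (nat * nat)) (p : config) : Prop :=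
  simple_graph n E /\
  forall e, In e E -> exists c, (c < d)%nat /\ p (fst e) c <> p (snd e) c.

Definition affinely_independent (d m : nat) (x : config) : Prop :=
  forall lam : nat -> R,
    sumn_R m lam = 0 ->
    (forall c, (c < d)%nat -> sumn_R m (fun k => lam k * x k c) = 0) ->
    forall k, (k < m)%nat -> lam k = 0.

Definition affine_span_dim (n d : nat) (p : config) (l : nat) : Prop :=
  (exists idx : nat -> nat, (forall k, (k <= l)%nat -> (idx k < n)%nat) /\
      affinely_independent d (S l) (fun k => p (idx k))) /\
  (forall idx : nat -> nat, (forall k, (k <= S l)%nat -> (idx k < n)%nat) ->
      ~ affinely_independent d (S (S l)) (fun k => p (idx k))).

(* l-pinned position: q_1 = 0 and q_i in span(e_1,..,e_{i-1}) for 2 <= i <= l+1;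
   0-based: for point index i <= l, all coordinates c >= i vanish. *)
Definition pinned_position (n d l : nat) (q : config) : Prop :=
  forall i c, (i <= l)%nat -> (i < n)%nat -> (i <= c)%nat -> (c < d)%nat ->
    q i c = 0.

Definition pinned (n d : nat) (p : config) (l : nat) : Prop :=
  affine_span_dim n d p l /\ (l < n)%nat /\
  affinely_independent d (S l) p /\ pinned_position n d l p.

Definition analytic_at (f : R -> R) (t0 : R) : Prop :=
  exists (a : nat -> R) (r : R), 0 < r /\
    forall t, Rabs (t - t0) < r -> is_series (fun k => a k * (t - t0) ^ k) (f t).

Definition trajectory (n d l : nat) (p : config) (P : R -> config) : Prop :=
  exists eps, 0 < eps /\
    (forall i c, (i < n)%nat -> (c < d)%nat -> P 0 i c = p i c) /\
    (forall t, 0 <= t <= eps -> pinned_position n d l (P t)) /\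
    (forall i c t0, (i < n)%nat -> (c < d)%nat -> 0 <= t0 <= eps ->
        analytic_at (fun t => P t i c) t0) /\
    (exists t i c, 0 <= t <= eps /\ (i < n)%nat /\ (c < d)%nat /\
        P t i c <> P 0 i c).

Definition k_vanishing (phi : R -> R) (k : nat) : Prop :=
  forall i, (1 <= i <= k)%nat -> Derive_n phi i 0 = 0.

Definition traj_vanishing (n d : nat) (P : R -> config) (k : nat) : Prop :=
  forall i c, (i < n)%nat -> (c < d)%nat -> k_vanishing (fun t => P t i c) k.

Definition traj_active (n d : nat) (P : R -> config) (j : nat) : Prop :=
  (1 <= j)%nat /\ traj_vanishing n d P (j - 1) /\ ~ traj_vanishing n d P j.

(* measurement map m(q) = (|q_i - q_j|^2)_{ij in E} composed with P is
   k-vanishing (coordinatewise) *)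
Definition flex (n d l : nat) (E : list (nat * nat)) (p : config)
    (P : R -> config) (j k : nat) : Prop :=
  trajectory n d l p P /\ traj_active n d P j /\
  forall e, In e E -> k_vanishing (fun t => sqdist d (P t (fst e)) (P t (snd e))) k.

Definition f_flex (n d l : nat) (p : config) (f : config -> R)
    (P : R -> config) (j k : nat) : Prop :=
  trajectory n d l p P /\ traj_active n d P j /\ k_vanishing (fun t => f (P t)) k.

Definition energy (d : nat) (E : list (nat * nat)) (Eb : nat -> nat -> R -> R)
    (q : config) : R :=
  fold_right Rplus 0 (map (fun e => Eb (fst e) (snd e) (dist d (q (fst e)) (q (snd e)))) E).

Definition stiff_bar (d : nat) (E : list (nat * nat)) (Eb : nat -> nat -> R -> R)
    (p : config) : Prop :=
  forall e, In e E ->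
    let f := Eb (fst e) (snd e) in
    let dij := dist d (p (fst e)) (p (snd e)) in
    analytic_at f dij /\
    (exists delta, 0 < delta /\
       forall x, 0 < Rabs (x - dij) < delta -> f dij < f x) /\
    Derive_n f 2 dij > 0.

(* Main.v *)
Require Import Defs.
From Stdlib Require Import Reals List Lra Lia FunctionalExtensionality.
From Coquelicot Require Import Coquelicot.
Open Scope R_scope.

Lemma locally_ball (x0 r y : R) : Rabs (y - x0) < r ->
  locally y (fun z => Rabs (z - x0) < r).
Proof.
  intros H.
  assert (Hp : 0 < r - Rabs (y - x0)) by lra.
  exists (mkposreal _ Hp). intros z Hz.
  change (Rabs (z - y) < r - Rabs (y - x0)) in Hz.
  pose proof (Rabs_triang (z - y) (y - x0)).
  replace (z - y + (y - x0)) with (z - x0) in H0 by ring. lra.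
Qed.

Fixpoint Cn (n : nat) (f : R -> R) (x0 r : R) : Prop :=
  match n with
  | O => True
  | S n => (forall y, Rabs (y - x0) < r -> ex_derive f y) /\ Cn n (Derive f) x0 r
  end.

Lemma Cn_ext n : forall f g x0 r, (forall y, Rabs (y - x0) < r -> f y = g y) ->
  Cn n f x0 r -> Cn n g x0 r.
Proof.
  induction n as [|n IH]; simpl; auto.
  intros f g x0 r Hfg [H1 H2]. split.
  - intros y Hy. apply (ex_derive_ext_loc f g); auto.
    eapply filter_imp; [|apply (locally_ball x0 r y Hy)]. simpl. intros z Hz; auto.
  - apply (IH (Derive f)); auto.
    intros y Hy. apply Derive_ext_loc.
    eapply filter_imp; [|apply (locally_ball x0 r y Hy)]. simpl. intros z Hz; auto.
Qed.

Lemma Cn_restrict n : forall f x0 r x1 r1,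
  (forall y, Rabs (y - x1) < r1 -> Rabs (y - x0) < r) ->
  Cn n f x0 r -> Cn n f x1 r1.
Proof.
  induction n as [|n IH]; simpl; auto.
  intros f x0 r x1 r1 Hs [H1 H2]. split; eauto.
Qed.

Lemma Cn_mono n : forall f x0 r, Cn (S n) f x0 r -> Cn n f x0 r.
Proof.
  induction n as [|n IH]; simpl; auto.
  intros f x0 r [H1 [H2 H3]]. split; auto. apply IH. simpl. auto.
Qed.

Lemma Cn_mono_le n m : (m <= n)%nat -> forall f x0 r, Cn n f x0 r -> Cn m f x0 r.
Proof.
  induction 1; auto. intros. apply IHle. apply Cn_mono. auto.
Qed.

Lemma Derive_n_S_l k : forall f, Derive_n f (S k) = Derive_n (Derive f) k.
Proof.
  induction k as [|k IH]; intros f; simpl; auto.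
  apply functional_extensionality. intros x.
  change (Derive (Derive_n f (S k)) x = Derive (Derive_n (Derive f) k) x).
  rewrite IH. auto.
Qed.

Lemma Cn_ex_derive_n n : forall f x0 r, Cn n f x0 r ->
  forall k y, (k <= n)%nat -> Rabs (y - x0) < r -> ex_derive_n f k y.
Proof.
  induction n as [|n IH]; intros f x0 r H k y Hk Hy.
  - assert (k = 0%nat) by lia. subst. simpl. auto.
  - destruct H as [H1 H2]. destruct k as [|k]; simpl; auto.
    destruct k as [|k]; simpl; auto.
    change (ex_derive (Derive_n f (S k)) y).
    rewrite Derive_n_S_l.
    change (ex_derive_n (Derive f) (S k) y). eapply IH; eauto. lia.
Qed.

Lemma Cn_const n : forall c x0 r, Cn n (fun _ => c) x0 r.
Proof.
  induction n as [|n IH]; simpl; auto. intros c x0 r. split.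
  - intros; apply ex_derive_const.
  - apply (Cn_ext n (fun _ => 0)); auto. intros; rewrite Derive_const; auto.
Qed.

Lemma Cn_id n : forall x0 r, Cn n (fun x => x) x0 r.
Proof.
  destruct n as [|n]; simpl; auto. intros. split.
  - intros; apply ex_derive_id.
  - apply (Cn_ext n (fun _ => 1)); [|apply Cn_const]. intros; rewrite Derive_id; auto.
Qed.

Lemma Cn_plus n : forall f g x0 r, Cn n f x0 r -> Cn n g x0 r ->
  Cn n (fun x => f x + g x) x0 r.
Proof.
  induction n as [|n IH]; simpl; auto.
  intros f g x0 r [F1 F2] [G1 G2]. split.
  - intros y Hy. apply (ex_derive_plus f g); auto.
  - apply (Cn_ext n (fun x => Derive f x + Derive g x)); auto.
    intros y Hy. symmetry. apply (Derive_plus f g); auto.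
Qed.

Lemma Cn_mult n : forall f g x0 r, Cn n f x0 r -> Cn n g x0 r ->
  Cn n (fun x => f x * g x) x0 r.
Proof.
  induction n as [|n IH]; simpl; auto.
  intros f g x0 r [F1 F2] [G1 G2]. split.
  - intros y Hy. apply (ex_derive_mult f g); auto.
  - apply (Cn_ext n (fun x => Derive f x * g x + f x * Derive g x)).
    + intros y Hy. symmetry. apply (Derive_mult f g); auto.
    + apply Cn_plus; apply IH; auto.
      * apply Cn_mono. simpl; auto.
      * apply Cn_mono. simpl; auto.
Qed.

Lemma Cn_comp n : forall f g x0 r y0 R0, Cn n f y0 R0 -> Cn n g x0 r ->
  (forall y, Rabs (y - x0) < r -> Rabs (g y - y0) < R0) ->
  Cn n (fun x => f (g x)) x0 r.
Proof.
  induction n as [|n IH]; simpl; auto.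
  intros f g x0 r y0 R0 [F1 F2] [G1 G2] Hm. split.
  - intros y Hy. apply (ex_derive_comp f g); auto.
  - apply (Cn_ext n (fun x => Derive g x * Derive f (g x))).
    + intros y Hy. symmetry. apply (Derive_comp f g); auto.
    + apply Cn_mult; auto. eapply IH; eauto.
      apply Cn_mono. simpl; auto.
Qed.

Lemma Cn_inv n : forall x0 r, r <= Rabs x0 -> Cn n (fun x => / x) x0 r.
Proof.
  induction n as [|n IH]; simpl; auto. intros x0 r Hr.
  assert (Hnz : forall y, Rabs (y - x0) < r -> y <> 0).
  { intros y Hy E; subst. rewrite Rabs_minus_sym, Rminus_0_r in Hy. lra. }
  split.
  - intros y Hy. apply (ex_derive_inv (fun x => x)); [apply ex_derive_id|]. eauto.
  - apply (Cn_ext n (fun x => (-1) * (/ x * / x))).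
    + intros y Hy. symmetry.
      rewrite (Derive_inv (fun x => x)); [|apply ex_derive_id|eauto].
      pose proof (Hnz y Hy). rewrite Derive_id. field. auto.
    + apply Cn_mult; [apply Cn_const|]. apply Cn_mult; auto.
Qed.

Lemma Cn_sqrt n : forall x0 r, 0 <= r <= x0 -> Cn n sqrt x0 r.
Proof.
  induction n as [|n IH]; simpl; auto. intros x0 r Hr.
  assert (Hp : forall y, Rabs (y - x0) < r -> 0 < y).
  { intros y Hy. apply Rabs_def2 in Hy. lra. }
  split.
  - intros y Hy. eexists. apply (is_derive_sqrt (fun x => x) y 1); auto.
    apply (is_derive_id y).
  - apply (Cn_ext n (fun x => / 2 * (sqrt x * / x))).
    + intros y Hy. symmetry. apply is_derive_unique.
      pose proof (Hp y Hy).
      replace (/ 2 * (sqrt y * / y)) with (1 / (2 * sqrt (id y))).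
      * apply (is_derive_sqrt (fun x => x) y 1); auto. apply (is_derive_id y).
      * unfold id. pose proof (sqrt_lt_R0 y H).
        assert (Hs : sqrt y * sqrt y = y) by (apply sqrt_sqrt; lra).
        set (s := sqrt y) in *. rewrite <- Hs. field. apply Rgt_not_eq; exact H0.
    + apply Cn_mult; [apply Cn_const|]. apply Cn_mult; auto.
      apply Cn_inv. rewrite Rabs_right; lra.
Qed.

Definition Smooth (f : R -> R) (x0 : R) := exists r, 0 < r /\ forall n, Cn n f x0 r.

Lemma Smooth_const c x0 : Smooth (fun _ => c) x0.
Proof. exists 1; split; [lra|]. intros; apply Cn_const. Qed.

Lemma Smooth_id x0 : Smooth (fun x => x) x0.
Proof. exists 1; split; [lra|]. intros; apply Cn_id. Qed.

Lemma Smooth_plus f g x0 : Smooth f x0 -> Smooth g x0 -> Smooth (fun x => f x + g x) x0.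
Proof.
  intros [r1 [H1 F]] [r2 [H2 G]]. exists (Rmin r1 r2). split.
  { apply Rmin_pos; auto. }
  intros n. apply Cn_plus.
  - apply (Cn_restrict n f x0 r1); auto. intros y Hy. pose proof (Rmin_l r1 r2). lra.
  - apply (Cn_restrict n g x0 r2); auto. intros y Hy. pose proof (Rmin_r r1 r2). lra.
Qed.

Lemma Smooth_mult f g x0 : Smooth f x0 -> Smooth g x0 -> Smooth (fun x => f x * g x) x0.
Proof.
  intros [r1 [H1 F]] [r2 [H2 G]]. exists (Rmin r1 r2). split.
  { apply Rmin_pos; auto. }
  intros n. apply Cn_mult.
  - apply (Cn_restrict n f x0 r1); auto. intros y Hy. pose proof (Rmin_l r1 r2). lra.
  - apply (Cn_restrict n g x0 r2); auto. intros y Hy. pose proof (Rmin_r r1 r2). lra.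
Qed.

Lemma Smooth_ex_derive f x0 : Smooth f x0 -> ex_derive f x0.
Proof.
  intros [r [Hr F]]. destruct (F 1%nat) as [H _]. apply H.
  rewrite Rminus_eq_0, Rabs_R0; auto.
Qed.

Lemma cont_eps_delta g x0 : ex_derive g x0 ->
  forall eps, 0 < eps -> exists delta, 0 < delta /\
    forall y, Rabs (y - x0) < delta -> Rabs (g y - g x0) < eps.
Proof.
  intros Hd eps He.
  pose proof (ex_derive_continuous g x0 Hd) as Hc.
  unfold continuous in Hc.
  destruct (proj1 (filterlim_locally g (g x0)) Hc (mkposreal eps He)) as [del Hdel].
  exists (pos del). split; [apply cond_pos|].
  intros y Hy. apply (Hdel y). exact Hy.
Qed.

Lemma Smooth_comp f g x0 : Smooth f (g x0) -> Smooth g x0 -> Smooth (fun x => f (g x)) x0.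
Proof.
  intros [rf [Hf F]] Hg.
  pose proof (Smooth_ex_derive g x0 Hg) as Hd.
  destruct Hg as [rg [Hrg G]].
  destruct (cont_eps_delta g x0 Hd rf Hf) as [del [Hdel Hc]].
  exists (Rmin rg del). split; [apply Rmin_pos; auto|].
  intros n. apply (Cn_comp n f g x0 _ (g x0) rf); auto.
  - apply (Cn_restrict n g x0 rg); auto. intros y Hy. pose proof (Rmin_l rg del). lra.
  - intros y Hy. apply Hc. pose proof (Rmin_r rg del). lra.
Qed.

Lemma Smooth_sqrt x0 : 0 < x0 -> Smooth sqrt x0.
Proof.
  intros H. exists x0. split; auto. intros n. apply Cn_sqrt. lra.
Qed.

Lemma Smooth_ext f g x0 : Smooth f x0 ->
  (exists r, 0 < r /\ forall y, Rabs (y - x0) < r -> f y = g y) -> Smooth g x0.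
Proof.
  intros [r1 [H1 F]] [r2 [H2 E]]. exists (Rmin r1 r2). split; [apply Rmin_pos; auto|].
  intros n. apply (Cn_ext n f g).
  - intros y Hy. apply E. pose proof (Rmin_r r1 r2). lra.
  - apply (Cn_restrict n f x0 r1); auto. intros y Hy. pose proof (Rmin_l r1 r2). lra.
Qed.

Lemma Smooth_ext_all f g x0 : Smooth f x0 -> (forall y, f y = g y) -> Smooth g x0.
Proof.
  intros H E. apply (Smooth_ext f); auto. exists 1. split; [lra|]. auto.
Qed.

Lemma sum_abs_bound (u : nat -> R) N : 0 <= sum_f_R0 (fun i => Rabs (u i)) N /\
  forall n, (n <= N)%nat -> Rabs (u n) <= sum_f_R0 (fun i => Rabs (u i)) N.
Proof.
  induction N as [|N [IH1 IH2]]; simpl.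
  - split; [apply Rabs_pos|]. intros n Hn. assert (n = 0%nat) by lia. subst; lra.
  - pose proof (Rabs_pos (u (S N))). split; [lra|].
    intros n Hn. destruct (Nat.eq_dec n (S N)).
    + subst. lra.
    + assert (n <= N)%nat by lia. pose proof (IH2 n H0). lra.
Qed.

Lemma lim0_bounded (u : nat -> R) : is_lim_seq u 0 -> exists M, forall n, Rabs (u n) <= M.
Proof.
  intros H. apply is_lim_seq_spec in H. simpl in H.
  destruct (H (mkposreal 1 Rlt_0_1)) as [N HN]. simpl in HN.
  destruct (sum_abs_bound u N) as [S1 S2].
  exists (1 + sum_f_R0 (fun i => Rabs (u i)) N). intros n.
  destruct (Compare_dec.le_lt_dec N n).
  - pose proof (HN n l). rewrite Rminus_0_r in H0. lra.
  - pose proof (S2 n ltac:(lia)). lra.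
Qed.

Lemma Cn_PSeries n : forall a (R0 : R), Rbar_le R0 (CV_radius a) -> Cn n (PSeries a) 0 R0.
Proof.
  assert (Hin : forall a (R0 : R) y, Rbar_le R0 (CV_radius a) -> Rabs (y - 0) < R0 ->
     Rbar_lt (Rabs y) (CV_radius a)).
  { intros a R0 y H1 H2. rewrite Rminus_0_r in H2.
    apply (Rbar_lt_le_trans _ (Finite R0)); auto. }
  induction n as [|n IH]; simpl; auto. intros a R0 H. split.
  - intros y Hy. apply ex_derive_PSeries. eauto.
  - apply (Cn_ext n (PSeries (PS_derive a))).
    + intros y Hy. symmetry. apply Derive_PSeries. eauto.
    + apply IH. rewrite CV_radius_derive. auto.
Qed.

Lemma Smooth_analytic f t0 : analytic_at f t0 -> Smooth f t0.
Proof.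
  intros [a [r [Hr Hs]]].
  assert (HR : Rbar_le (r / 2) (CV_radius a)).
  { destruct (CV_radius_bounded a) as [Hub _]. apply Hub.
    assert (Hx : Rabs (t0 + r / 2 - t0) < r).
    { replace (t0 + r/2 - t0) with (r/2) by ring. rewrite Rabs_right; lra. }
    pose proof (Hs _ Hx) as Hser.
    replace (t0 + r / 2 - t0) with (r/2) in Hser by ring.
    apply lim0_bounded. apply ex_series_lim_0. eexists; eauto. }
  exists (r / 2). split; [lra|]. intros n.
  apply (Cn_ext n (fun t => PSeries a (t - t0))).
  - intros y Hy. unfold PSeries. apply is_series_unique. apply Hs. lra.
  - apply (Cn_comp n (PSeries a) (fun t => t - t0) t0 (r/2) 0 (r/2)).
    + apply Cn_PSeries; auto.
    + apply (Cn_plus n (fun x => x) (fun _ => - t0)); [apply Cn_id|apply Cn_const].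
    + intros y Hy. rewrite Rminus_0_r. auto.
Qed.

Definition Tpoly (f : R -> R) (x0 : R) (N : nat) (y : R) :=
  sum_f_R0 (fun m => (y - x0) ^ m / INR (Factorial.fact m) * Derive_n f m x0) N.

Lemma INR_fact_ge1 m : 1 <= INR (Factorial.fact m).
Proof.
  pose proof (Factorial.lt_O_fact m). apply (le_INR 1). lia.
Qed.

Lemma TaylorR f x0 N : Smooth f x0 -> exists C delta, 0 < delta /\
  forall y, x0 < y < x0 + delta -> Rabs (f y - Tpoly f x0 N y) <= C * (y - x0) ^ (S N).
Proof.
  intros [r [Hr F]].
  assert (Hd : ex_derive (Derive_n f (S N)) x0).
  { pose proof (Cn_ex_derive_n (S (S N)) f x0 r (F _) (S (S N)) x0 (le_n _)) as H.
    rewrite Rminus_eq_0, Rabs_R0 in H. apply H; auto. }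
  destruct (cont_eps_delta _ x0 Hd 1 Rlt_0_1) as [d1 [Hd1 Hc]].
  exists (Rabs (Derive_n f (S N) x0) + 1), (Rmin r d1). split; [apply Rmin_pos; auto|].
  intros y Hy. pose proof (Rmin_l r d1). pose proof (Rmin_r r d1).
  destruct (Taylor_Lagrange f N x0 y) as [z [Hz E]]; [lra| |].
  { intros t Ht k Hk. apply (Cn_ex_derive_n (S N) f x0 r (F _)); auto.
    rewrite Rabs_right; lra. }
  unfold Tpoly. rewrite E.
  match goal with |- Rabs (?A + ?B - ?A) <= _ => replace (A + B - A) with B by ring end.
  assert (Hz1 : Rabs (Derive_n f (S N) z) <= Rabs (Derive_n f (S N) x0) + 1).
  { assert (Rabs (z - x0) < d1) by (rewrite Rabs_right; lra).
    pose proof (Hc z H1).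
    pose proof (Rabs_triang_inv (Derive_n f (S N) z) (Derive_n f (S N) x0)). lra. }
  rewrite Rabs_mult. unfold Rdiv. rewrite Rabs_mult.
  pose proof (INR_fact_ge1 (S N)).
  rewrite (Rabs_right (/ INR (Factorial.fact (S N)))) by (apply Rle_ge, Rlt_le, Rinv_0_lt_compat; lra).
  rewrite (Rabs_right ((y - x0) ^ S N)) by (apply Rle_ge, pow_le; lra).
  assert (Hp : 0 <= (y - x0) ^ S N) by (apply pow_le; lra).
  assert (Hi : / INR (Factorial.fact (S N)) <= 1).
  { rewrite <- Rinv_1. apply Rinv_le_contravar; lra. }
  assert (0 < / INR (Factorial.fact (S N))) by (apply Rinv_0_lt_compat; lra).
  pose proof (Rabs_pos (Derive_n f (S N) z)).
  rewrite (Rmult_comm _ ((y - x0) ^ S N)).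
  rewrite Rmult_assoc. apply Rmult_le_compat_l; auto.
  apply Rle_trans with (1 * Rabs (Derive_n f (S N) z)); [|lra].
  apply Rmult_le_compat_r; lra.
Qed.

Lemma Tpoly_center f x0 N : Tpoly f x0 N x0 = f x0.
Proof.
  unfold Tpoly. induction N as [|N IH]; simpl.
  - field.
  - rewrite IH, Rminus_eq_0. unfold Rdiv. rewrite !Rmult_0_l. ring.
Qed.

Lemma Taylor f x0 N : Smooth f x0 -> exists C delta, 0 < delta /\
  forall y, Rabs (y - x0) < delta ->
    Rabs (f y - Tpoly f x0 N y) <= C * Rabs (y - x0) ^ (S N).
Proof.
  intros Hf.
  destruct (TaylorR f x0 N Hf) as [C1 [d1 [Hd1 H1]]].
  set (g := fun u => f (-1 * u)).
  assert (Hg : Smooth g (- x0)).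
  { unfold g. apply (Smooth_comp f (fun u => -1 * u)).
    - replace (-1 * - x0) with x0 by ring. auto.
    - apply Smooth_mult; [apply Smooth_const|apply Smooth_id]. }
  destruct (TaylorR g (- x0) N Hg) as [C2 [d2 [Hd2 H2]]].
  destruct Hf as [r [Hr F]].
  exists (Rabs C1 + Rabs C2), (Rmin r (Rmin d1 d2)).
  pose proof (Rmin_l r (Rmin d1 d2)). pose proof (Rmin_r r (Rmin d1 d2)).
  pose proof (Rmin_l d1 d2). pose proof (Rmin_r d1 d2).
  split; [repeat apply Rmin_pos; auto|].
  intros y Hy.
  assert (HP : 0 <= Rabs (y - x0) ^ S N) by (apply pow_le, Rabs_pos).
  destruct (Rtotal_order y x0) as [Hlt|[Heq|Hgt]].
  -
    assert (Hy' : - x0 < - y < - x0 + d2).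
    { rewrite Rabs_left in Hy by lra. lra. }
    pose proof (H2 (- y) Hy') as K.
    replace (g (- y)) with (f y) in K by (unfold g; f_equal; ring).
    replace (Tpoly g (- x0) N (- y)) with (Tpoly f x0 N y) in K.
    + replace (- y - - x0) with (Rabs (y - x0)) in K by (rewrite Rabs_left; lra).
      apply Rle_trans with (1 := K). apply Rmult_le_compat_r; auto.
      pose proof (Rle_abs C2). pose proof (Rabs_pos C1). lra.
    + unfold Tpoly. apply sum_eq. intros i Hi.
      unfold g. rewrite Derive_n_comp_scal.
      * replace (-1 * - x0) with x0 by ring.
        replace (- y - - x0) with (-1 * (y - x0)) by ring.
        rewrite Rpow_mult_distr.
        assert (Hm : (-1) ^ i * (-1) ^ i = 1).
        { rewrite <- Rpow_mult_distr. replace (-1 * -1) with 1 by ring. apply pow1. }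
        transitivity ((-1) ^ i * (-1) ^ i * ((y - x0) ^ i / INR (Factorial.fact i) * Derive_n f i x0)).
        { rewrite Hm; ring. }
        field. apply Rgt_not_eq. pose proof (INR_fact_ge1 i). lra.
      * replace (-1 * - x0) with x0 by ring.
        eapply filter_imp; [|apply (locally_ball x0 r x0)].
        -- simpl. intros z Hz k Hk. apply (Cn_ex_derive_n i f x0 r (F _)); auto.
        -- rewrite Rminus_eq_0, Rabs_R0; auto.
  - subst. rewrite Tpoly_center. rewrite Rminus_eq_0, Rabs_R0.
    apply Rmult_le_pos; auto. pose proof (Rabs_pos C1); pose proof (Rabs_pos C2); lra.
  - assert (Hy' : x0 < y < x0 + d1).
    { rewrite Rabs_right in Hy by lra. lra. }
    pose proof (H1 y Hy') as K.
    rewrite (Rabs_right (y - x0)) by lra.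
    apply Rle_trans with (1 := K). apply Rmult_le_compat_r; [apply pow_le; lra|].
    pose proof (Rle_abs C1). pose proof (Rabs_pos C2). lra.
Qed.

Definition bigO (N : nat) (f : R -> R) := exists C delta, 0 < delta /\
  forall t, 0 < t < delta -> Rabs (f t) <= C * t ^ N.

Lemma bigO_ext N f g : bigO N f -> (forall t, 0 < t -> f t = g t) -> bigO N g.
Proof.
  intros [C [d [Hd H]]] E. exists C, d. split; auto. intros t Ht. rewrite <- E by lra. auto.
Qed.

Lemma bigO_plus N f g : bigO N f -> bigO N g -> bigO N (fun t => f t + g t).
Proof.
  intros [C1 [d1 [Hd1 H1]]] [C2 [d2 [Hd2 H2]]]. exists (C1 + C2), (Rmin d1 d2).
  split; [apply Rmin_pos; auto|]. intros t Ht.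
  pose proof (Rmin_l d1 d2). pose proof (Rmin_r d1 d2).
  pose proof (H1 t ltac:(lra)). pose proof (H2 t ltac:(lra)).
  pose proof (Rabs_triang (f t) (g t)). lra.
Qed.

Lemma bigO_opp N f : bigO N f -> bigO N (fun t => - f t).
Proof.
  intros [C [d [Hd H]]]. exists C, d. split; auto. intros t Ht. rewrite Rabs_Ropp. auto.
Qed.

Lemma bigO_minus N f g : bigO N f -> bigO N g -> bigO N (fun t => f t - g t).
Proof.
  intros H1 H2. apply (bigO_plus N f (fun t => - g t)); auto. apply bigO_opp; auto.
Qed.

Lemma pow_le_1_mono (t : R) a b : 0 <= t <= 1 -> (b <= a)%nat -> t ^ a <= t ^ b.
Proof.
  intros Ht Hab. replace a with (b + (a - b))%nat by lia. rewrite pow_add.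
  pose proof (pow_le t b ltac:(lra)).
  assert (Hk : forall k, 0 <= t ^ k <= 1).
  { induction k; simpl; [lra|]. nra. }
  pose proof (Hk (a - b)%nat).
  nra.
Qed.

Lemma bigO_weaken a b f : bigO a f -> (b <= a)%nat -> bigO b f.
Proof.
  intros [C [d [Hd H]]] Hab. exists (Rabs C), (Rmin d 1). split; [apply Rmin_pos; lra|].
  intros t Ht. pose proof (Rmin_l d 1). pose proof (Rmin_r d 1).
  pose proof (H t ltac:(lra)).
  pose proof (pow_le_1_mono t a b ltac:(lra) Hab).
  pose proof (pow_le t a ltac:(lra)).
  pose proof (Rle_abs C). pose proof (Rabs_pos C).
  apply Rle_trans with (C * t ^ a); auto.
  apply Rle_trans with (Rabs C * t ^ a); [nra|]. apply Rmult_le_compat_l; auto.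
Qed.

Lemma bigO_mult a b f g : bigO a f -> bigO b g -> bigO (a + b) (fun t => f t * g t).
Proof.
  intros [C1 [d1 [Hd1 H1]]] [C2 [d2 [Hd2 H2]]]. exists (C1 * C2), (Rmin d1 d2).
  split; [apply Rmin_pos; auto|]. intros t Ht.
  pose proof (Rmin_l d1 d2). pose proof (Rmin_r d1 d2).
  pose proof (H1 t ltac:(lra)). pose proof (H2 t ltac:(lra)).
  rewrite Rabs_mult, pow_add.
  pose proof (Rabs_pos (f t)). pose proof (Rabs_pos (g t)).
  replace (C1 * C2 * (t ^ a * t ^ b)) with ((C1 * t ^ a) * (C2 * t ^ b)) by ring.
  apply Rmult_le_compat; auto.
Qed.

Lemma bigO_mon m c : bigO m (fun t => c * t ^ m).
Proof.
  exists (Rabs c), 1. split; [lra|]. intros t Ht.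
  rewrite Rabs_mult. rewrite (Rabs_right (t ^ m)); [lra|]. apply Rle_ge, pow_le; lra.
Qed.

Lemma bigO_coef0 m c : bigO (S m) (fun t => c * t ^ m) -> c = 0.
Proof.
  intros [C [d [Hd H]]].
  destruct (Req_dec c 0) as [E|Hc]; auto. exfalso.
  assert (Ha : 0 < Rabs c) by (apply Rabs_pos_lt; auto).
  set (t := Rmin (d / 2) (Rabs c / (2 * (Rabs C + 1)))).
  pose proof (Rabs_pos C).
  assert (Ht : 0 < t).
  { apply Rmin_pos; [lra|]. apply Rdiv_lt_0_compat; lra. }
  assert (Ht2 : t <= Rabs c / (2 * (Rabs C + 1))) by apply Rmin_r.
  assert (Ht3 : t <= d / 2) by apply Rmin_l.
  pose proof (H t ltac:(lra)) as K.
  rewrite Rabs_mult, (Rabs_right (t ^ m)) in K by (apply Rle_ge, pow_le; lra).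
  simpl in K.
  pose proof (pow_lt t m Ht) as Hp.
  assert (Rabs c <= C * t).
  { apply (Rmult_le_reg_r (t ^ m)); auto. lra. }
  assert (t * (2 * (Rabs C + 1)) <= Rabs c).
  { apply (Rmult_le_compat_r (2 * (Rabs C + 1))) in Ht2; [|lra].
    unfold Rdiv in Ht2. rewrite Rmult_assoc, Rinv_l in Ht2 by lra. lra. }
  pose proof (Rle_abs C). nra.
Qed.

Lemma bigO_small m f : bigO m f -> (1 <= m)%nat -> forall eps, 0 < eps ->
  exists delta, 0 < delta /\ forall t, 0 < t < delta -> Rabs (f t) < eps.
Proof.
  intros Hf Hm eps He.
  destruct (bigO_weaken m 1 f Hf Hm) as [C [d [Hd H]]].
  exists (Rmin d (eps / (Rabs C + 1))). pose proof (Rabs_pos C).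
  split. { apply Rmin_pos; auto. apply Rdiv_lt_0_compat; lra. }
  intros t Ht. pose proof (Rmin_l d (eps / (Rabs C + 1))).
  pose proof (Rmin_r d (eps / (Rabs C + 1))).
  pose proof (H t ltac:(lra)) as K. simpl in K. rewrite Rmult_1_r in K.
  assert (t * (Rabs C + 1) < eps).
  { apply Rlt_le_trans with ((eps / (Rabs C + 1)) * (Rabs C + 1)).
    - apply Rmult_lt_compat_r; lra.
    - unfold Rdiv. rewrite Rmult_assoc, Rinv_l by lra. lra. }
  pose proof (Rle_abs C). nra.
Qed.

Lemma Tpoly_flat f x0 N y : (forall i, (1 <= i <= N)%nat -> Derive_n f i x0 = 0) ->
  Tpoly f x0 N y = f x0.
Proof.
  unfold Tpoly. induction N as [|N IH]; intros H.
  - simpl. field.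
  - cbn [sum_f_R0]. rewrite IH by (intros; apply H; lia). rewrite (H (S N)) by lia. ring.
Qed.

Lemma Tpoly_lead f x0 m y : (1 <= m)%nat ->
  (forall i, (1 <= i < m)%nat -> Derive_n f i x0 = 0) ->
  Tpoly f x0 m y = f x0 + (y - x0) ^ m / INR (Factorial.fact m) * Derive_n f m x0.
Proof.
  intros Hm H. destruct m as [|m]; [lia|].
  unfold Tpoly. simpl sum_f_R0 at 1.
  change (sum_f_R0 (fun m0 : nat => (y - x0) ^ m0 / INR (Factorial.fact m0) * Derive_n f m0 x0) m)
    with (Tpoly f x0 m y).
  rewrite Tpoly_flat; auto. intros i Hi; apply H; lia.
Qed.

Lemma flatO f N : Smooth f 0 -> (forall i, (1 <= i <= N)%nat -> Derive_n f i 0 = 0) ->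
  bigO (S N) (fun t => f t - f 0).
Proof.
  intros Hf H. destruct (Taylor f 0 N Hf) as [C [d [Hd K]]].
  exists C, d. split; auto. intros t Ht.
  assert (Rabs (t - 0) < d) by (rewrite Rminus_0_r, Rabs_right; lra).
  pose proof (K t H0). rewrite Tpoly_flat in H1 by auto.
  rewrite Rminus_0_r, (Rabs_right t) in H1 by lra. auto.
Qed.

Lemma leadO f m : Smooth f 0 -> (1 <= m)%nat ->
  (forall i, (1 <= i < m)%nat -> Derive_n f i 0 = 0) ->
  bigO (S m) (fun t => f t - f 0 - Derive_n f m 0 / INR (Factorial.fact m) * t ^ m).
Proof.
  intros Hf Hm H. destruct (Taylor f 0 m Hf) as [C [d [Hd K]]].
  exists C, d. split; auto. intros t Ht.
  assert (Rabs (t - 0) < d) by (rewrite Rminus_0_r, Rabs_right; lra).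
  pose proof (K t H0). rewrite Tpoly_lead in H1 by auto.
  rewrite !Rminus_0_r, (Rabs_right t) in H1 by lra.
  match goal with |- Rabs ?A <= _ => match type of H1 with Rabs ?B <= _ =>
    replace A with B by (unfold Rdiv; ring) end end. auto.
Qed.

Lemma uniqO f N : Smooth f 0 -> bigO (S N) (fun t => f t - f 0) ->
  forall i, (1 <= i <= N)%nat -> Derive_n f i 0 = 0.
Proof.
  intros Hf HO.
  assert (forall k i, (i <= k)%nat -> (1 <= i <= N)%nat -> Derive_n f i 0 = 0).
  { induction k as [|k IH]; intros i Hik Hi; [lia|].
    destruct (Nat.eq_dec i (S k)); [|apply IH; lia]. subst i.
    pose proof (leadO f (S k) Hf ltac:(lia) ltac:(intros; apply IH; lia)) as L.
    pose proof (bigO_weaken (S N) (S (S k)) _ HO ltac:(lia)) as L2.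
    pose proof (bigO_minus _ _ _ L2 L) as L3.
    assert (Hc : Derive_n f (S k) 0 / INR (Factorial.fact (S k)) = 0).
    { apply (bigO_coef0 (S k)). eapply bigO_ext; [exact L3|]. intros t Ht. cbv beta. ring. }
    pose proof (INR_fact_ge1 (S k)).
    unfold Rdiv in Hc. apply Rmult_integral in Hc. destruct Hc as [Hc|Hc]; auto.
    exfalso. apply (Rinv_neq_0_compat (INR (Factorial.fact (S k)))); auto. lra. }
  intros i Hi. apply (H i i); auto.
Qed.

Lemma sqrt_lin s x : 0 < s -> Rabs (sqrt x - sqrt s) <= Rabs (x - s) / sqrt s.
Proof.
  intros Hs. pose proof (sqrt_lt_R0 s Hs) as HD.
  assert (HDD : sqrt s * sqrt s = s) by (apply sqrt_sqrt; lra).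
  set (D := sqrt s) in *.
  apply (Rmult_le_reg_r D); auto.
  replace (Rabs (x - s) / D * D) with (Rabs (x - s)) by (field; lra).
  destruct (Rle_or_lt 0 x) as [Hx|Hx].
  - pose proof (sqrt_pos x). assert (Hyy : sqrt x * sqrt x = x) by (apply sqrt_sqrt; lra).
    set (y := sqrt x) in *. rewrite <- Hyy, <- HDD.
    replace (y * y - D * D) with ((y - D) * (y + D)) by ring.
    rewrite Rabs_mult, (Rabs_right (y + D)) by lra.
    pose proof (Rabs_pos (y - D)). nra.
  - rewrite sqrt_neg_0 by lra. rewrite Rabs_left by lra. rewrite Rabs_left by lra.
    rewrite <- HDD. nra.
Qed.

Lemma sqrt_quad s x : 0 < s ->
  Rabs (sqrt x - sqrt s - (x - s) / (2 * sqrt s)) <= (x - s) ^ 2 / (2 * sqrt s ^ 3).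
Proof.
  intros Hs. pose proof (sqrt_lt_R0 s Hs) as HD.
  assert (HDD : sqrt s * sqrt s = s) by (apply sqrt_sqrt; lra).
  set (D := sqrt s) in *.
  assert (HD3 : 0 < 2 * D ^ 3) by (simpl; nra).
  apply (Rmult_le_reg_r (2 * D ^ 3)); auto.
  replace ((x - s) ^ 2 / (2 * D ^ 3) * (2 * D ^ 3)) with ((x - s) ^ 2) by (field; lra).
  destruct (Rle_or_lt 0 x) as [Hx|Hx].
  - pose proof (sqrt_pos x). assert (Hyy : sqrt x * sqrt x = x) by (apply sqrt_sqrt; lra).
    set (y := sqrt x) in *. rewrite <- Hyy, <- HDD.
    replace (y - D - (y * y - D * D) / (2 * D)) with (- ((y - D) ^ 2 / (2 * D))) by (field; lra).
    rewrite Rabs_Ropp, Rabs_right.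
    + replace ((y - D) ^ 2 / (2 * D) * (2 * D ^ 3)) with ((y - D) ^ 2 * (D * D)) by (field; lra).
      replace ((y * y - D * D) ^ 2) with ((y - D) ^ 2 * ((y + D) * (y + D))) by ring.
      apply Rmult_le_compat_l; [apply pow2_ge_0|]. nra.
    + apply Rle_ge. apply Rmult_le_pos; [apply pow2_ge_0|]. apply Rlt_le, Rinv_0_lt_compat. lra.
  - rewrite sqrt_neg_0 by lra. rewrite <- HDD.
    replace (0 - D - (x - D * D) / (2 * D)) with (- ((D * D + x) / (2 * D))) by (field; lra).
    rewrite Rabs_Ropp. unfold Rdiv. rewrite Rabs_mult.
    rewrite (Rabs_right (/ (2 * D))) by (apply Rle_ge, Rlt_le, Rinv_0_lt_compat; lra).
    replace (Rabs (D * D + x) * / (2 * D) * (2 * D ^ 3)) with (Rabs (D * D + x) * (D * D)) by (field; lra).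
    assert (Rabs (D * D + x) <= D * D - x).
    { apply Rabs_le. split; nra. }
    assert (0 <= D * D) by nra.
    apply Rle_trans with ((D * D - x) * (D * D)); [apply Rmult_le_compat_r; auto|].
    replace ((x - D * D) ^ 2) with ((D * D - x) * (D * D - x)) by ring.
    apply Rmult_le_compat_l; nra.
Qed.

Lemma bigO_le m f g K : bigO m f -> (forall t, 0 < t -> Rabs (g t) <= K * Rabs (f t)) ->
  bigO m g.
Proof.
  intros [C [d [Hd H]]] Hg. exists (Rabs K * Rabs C), d. split; auto.
  intros t Ht. pose proof (H t Ht). pose proof (Hg t ltac:(lra)).
  pose proof (Rabs_pos (f t)). pose proof (Rle_abs K). pose proof (Rle_abs C).
  pose proof (Rabs_pos K). pose proof (Rabs_pos C). pose proof (pow_le t m ltac:(lra)).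
  apply Rle_trans with (Rabs K * Rabs (f t)); [nra|].
  rewrite Rmult_assoc. apply Rmult_le_compat_l; auto. nra.
Qed.

Lemma bigO_scal m f c : bigO m f -> bigO m (fun t => c * f t).
Proof.
  intros H. apply (bigO_le m f _ (Rabs c) H). intros t Ht. rewrite Rabs_mult. lra.
Qed.

Lemma pow_2m t m : t ^ (2 * m) = t ^ m * t ^ m.
Proof. replace (2 * m)%nat with (m + m)%nat by lia. apply pow_add. Qed.

Lemma deriv_min F D : Smooth F D ->
  (exists delta, 0 < delta /\ forall x, 0 < Rabs (x - D) < delta -> F D < F x) ->
  Derive_n F 1 D = 0.
Proof.
  intros HF [dl [Hdl Hmin]].
  destruct (Taylor F D 1 HF) as [C [dT [HdT K]]].
  set (a := Derive_n F 1 D).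
  destruct (Req_dec a 0) as [E|Ha]; auto. exfalso.
  assert (Haa : 0 < Rabs a) by (apply Rabs_pos_lt; auto).
  pose proof (Rabs_pos C).
  set (h := Rmin (Rmin (dl / 2) (dT / 2)) (Rabs a / (2 * (Rabs C + 1)))).
  assert (Hh0 : 0 < h).
  { apply Rmin_pos; [apply Rmin_pos; lra|]. apply Rdiv_lt_0_compat; lra. }
  assert (Hh1 : h <= dl / 2) by (eapply Rle_trans; [apply Rmin_l|apply Rmin_l]).
  assert (Hh2 : h <= dT / 2) by (eapply Rle_trans; [apply Rmin_l|apply Rmin_r]).
  assert (Hh3 : h <= Rabs a / (2 * (Rabs C + 1))) by apply Rmin_r.
  assert (Hh4 : h * (2 * (Rabs C + 1)) <= Rabs a).
  { apply (Rmult_le_compat_r (2 * (Rabs C + 1))) in Hh3; [|lra].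
    unfold Rdiv in Hh3. rewrite Rmult_assoc, Rinv_l in Hh3 by lra. lra. }
  assert (Hgen : forall y, Rabs (y - D) = h -> (y - D) * a = - (Rabs a * h) -> False).
  { intros y Hy Hya.
    pose proof (Hmin y ltac:(lra)) as M.
    pose proof (K y ltac:(lra)) as T.
    rewrite Tpoly_lead in T by (auto; intros; lia).
    simpl (INR (Factorial.fact 1)) in T. rewrite Hy in T.
    replace ((y - D) ^ 1 / 1 * Derive_n F 1 D) with ((y - D) * a) in T by (unfold a; field).
    rewrite Hya in T.
    pose proof (Rle_abs (F y - (F D + - (Rabs a * h)))).
    pose proof (Rle_abs C).
    assert (C * h ^ S 1 <= Rabs C * (h * h)) by (simpl; nra).
    nra. }
  destruct (Rlt_or_le 0 a) as [Hp|Hn].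
  - apply (Hgen (D - h)).
    + replace (D - h - D) with (- h) by ring. rewrite Rabs_Ropp, Rabs_right; lra.
    + rewrite Rabs_right by lra. ring.
  - apply (Hgen (D + h)).
    + replace (D + h - D) with h by ring. rewrite Rabs_right; lra.
    + rewrite Rabs_left1 by lra. ring.
Qed.

Lemma F_expand F D : Smooth F D -> Derive_n F 1 D = 0 ->
  exists CF dF, 0 < dF /\ forall y, Rabs (y - D) < dF ->
    Rabs (F y - F D - Derive_n F 2 D / 2 * (y - D) ^ 2) <= CF * Rabs (y - D) ^ 3.
Proof.
  intros HF H1. destruct (Taylor F D 2 HF) as [C [d [Hd K]]].
  exists C, d. split; auto. intros y Hy. pose proof (K y Hy) as T.
  rewrite Tpoly_lead in T by (auto; intros i Hi; assert (i = 1%nat) by lia; subst; auto).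
  simpl (INR (Factorial.fact 2)) in T.
  match goal with |- Rabs ?A <= _ => match type of T with Rabs ?B <= _ =>
    replace A with B by (field) end end. auto.
Qed.

Lemma compose_O F D a2 CF dF u m : 0 < dF ->
  (forall y, Rabs (y - D) < dF -> Rabs (F y - F D - a2 * (y - D) ^ 2) <= CF * Rabs (y - D) ^ 3) ->
  bigO m u -> (1 <= m)%nat ->
  bigO (3 * m) (fun t => F (D + u t) - F D - a2 * (u t) ^ 2).
Proof.
  intros HdF HFx Hu Hm.
  destruct (bigO_small m u Hu Hm dF HdF) as [d1 [Hd1 S1]].
  destruct Hu as [C [d0 [Hd0 H0]]].
  exists (Rabs CF * Rabs C ^ 3), (Rmin d0 d1). split; [apply Rmin_pos; auto|].
  intros t Ht. pose proof (Rmin_l d0 d1). pose proof (Rmin_r d0 d1).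
  pose proof (S1 t ltac:(lra)). pose proof (H0 t ltac:(lra)).
  assert (Hy : Rabs (D + u t - D) < dF) by (replace (D + u t - D) with (u t) by ring; auto).
  pose proof (HFx _ Hy) as T. replace (D + u t - D) with (u t) in T by ring.
  assert (Hb : Rabs (u t) <= Rabs C * t ^ m).
  { pose proof (Rle_abs C). pose proof (pow_le t m ltac:(lra)). nra. }
  assert (Hb3 : Rabs (u t) ^ 3 <= (Rabs C * t ^ m) ^ 3).
  { apply pow_incr. split; auto. apply Rabs_pos. }
  rewrite Rpow_mult_distr, <- pow_mult, Nat.mul_comm in Hb3.
  pose proof (Rle_abs CF). pose proof (Rabs_pos CF).
  pose proof (pow_le (Rabs (u t)) 3 (Rabs_pos _)).
  apply Rle_trans with (1 := T).
  apply Rle_trans with (Rabs CF * Rabs (u t) ^ 3); [nra|].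
  rewrite Rmult_assoc. apply Rmult_le_compat_l; auto.
Qed.

Lemma edge_A s F k : Smooth s 0 -> 0 < s 0 -> Smooth F (sqrt (s 0)) ->
  Derive_n F 1 (sqrt (s 0)) = 0 ->
  (forall i, (1 <= i <= k)%nat -> Derive_n s i 0 = 0) ->
  bigO (2 * k + 2) (fun t => F (sqrt (s t)) - F (sqrt (s 0))).
Proof.
  intros Hs Hs0 HF HF1 Hk.
  set (sg := s 0) in *. set (D := sqrt sg) in *.
  assert (HD : 0 < D) by (apply sqrt_lt_R0; auto).
  destruct (F_expand F D HF HF1) as [CF [dF [HdF HFx]]].
  set (a2 := Derive_n F 2 D / 2) in *.
  pose proof (flatO s k Hs Hk) as HDel. fold sg in HDel.
  assert (Hu : bigO (S k) (fun t => sqrt (s t) - D)).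
  { apply (bigO_le _ _ _ (/ D) HDel). intros t Ht. unfold D.
    pose proof (sqrt_lin sg (s t) Hs0). unfold Rdiv in H. lra. }
  pose proof (compose_O F D a2 CF dF _ (S k) HdF HFx Hu ltac:(lia)) as Hc.
  pose proof (bigO_scal _ _ a2 (bigO_mult _ _ _ _ Hu Hu)) as Hq.
  pose proof (bigO_plus _ _ _ (bigO_weaken _ (2 * k + 2) _ Hc ltac:(lia))
                              (bigO_weaken _ (2 * k + 2) _ Hq ltac:(lia))) as Hsum.
  eapply bigO_ext; [exact Hsum|]. intros t Ht. cbv beta.
  replace (D + (sqrt (s t) - D)) with (sqrt (s t)) by ring. ring.
Qed.

Lemma edge_B s F m : Smooth s 0 -> 0 < s 0 -> Smooth F (sqrt (s 0)) ->
  Derive_n F 1 (sqrt (s 0)) = 0 -> 0 < Derive_n F 2 (sqrt (s 0)) -> (1 <= m)%nat ->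
  (forall i, (1 <= i < m)%nat -> Derive_n s i 0 = 0) ->
  exists A, 0 <= A /\ (A = 0 -> Derive_n s m 0 = 0) /\
    bigO (2 * m + 1) (fun t => F (sqrt (s t)) - F (sqrt (s 0)) - A * t ^ (2 * m)).
Proof.
  intros Hs Hs0 HF HF1 HF2 Hm Hk.
  set (sg := s 0) in *. set (D := sqrt sg) in *.
  assert (HD : 0 < D) by (apply sqrt_lt_R0; auto).
  destruct (F_expand F D HF HF1) as [CF [dF [HdF HFx]]].
  set (a2 := Derive_n F 2 D / 2) in *.
  assert (Ha2 : 0 < a2) by (unfold a2; lra).
  set (c := Derive_n s m 0 / INR (Factorial.fact m)).
  pose proof (leadO s m Hs Hm Hk) as L. fold sg c in L.
  assert (HDel : bigO m (fun t => s t - sg)).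
  { eapply bigO_ext; [apply (bigO_plus _ _ _ (bigO_weaken _ m _ L ltac:(lia)) (bigO_mon m c))|].
    intros t Ht. cbv beta. ring. }
  assert (HQ : bigO (m + m) (fun t => sqrt (s t) - D - (s t - sg) / (2 * D))).
  { apply (bigO_le _ _ _ (/ (2 * D ^ 3)) (bigO_mult _ _ _ _ HDel HDel)).
    intros t Ht. pose proof (sqrt_quad sg (s t) Hs0). fold D in H.
    rewrite (Rabs_right ((s t - sg) * (s t - sg))) by (apply Rle_ge, Rle_0_sqr).
    replace (/ (2 * D ^ 3) * ((s t - sg) * (s t - sg))) with ((s t - sg) ^ 2 / (2 * D ^ 3))
      by (field; lra). auto. }
  set (b := c / (2 * D)).
  assert (Hub : bigO (S m) (fun t => sqrt (s t) - D - b * t ^ m)).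
  { eapply bigO_ext; [apply (bigO_plus _ _ _ (bigO_weaken _ (S m) _ HQ ltac:(lia))
        (bigO_scal _ _ (/ (2 * D)) L))|].
    intros t Ht. cbv beta. unfold b. field. lra. }
  assert (Hu : bigO m (fun t => sqrt (s t) - D)).
  { eapply bigO_ext; [apply (bigO_plus _ _ _ (bigO_weaken _ m _ Hub ltac:(lia)) (bigO_mon m b))|].
    intros t Ht. cbv beta. ring. }
  assert (Hu2 : bigO m (fun t => sqrt (s t) - D + b * t ^ m)).
  { apply (bigO_plus _ _ _ Hu (bigO_mon m b)). }
  pose proof (bigO_scal _ _ a2 (bigO_mult _ _ _ _ Hub Hu2)) as Hsq.
  pose proof (compose_O F D a2 CF dF _ m HdF HFx Hu Hm) as Hc.
  exists (a2 * (b * b)). split; [|split].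
  - apply Rmult_le_pos; [lra|]. apply Rle_0_sqr.
  - intros HA. apply Rmult_integral in HA. destruct HA as [HA|HA]; [lra|].
    apply Rmult_integral in HA. assert (Hb0 : b = 0) by (destruct HA; auto).
    unfold b in Hb0. unfold Rdiv in Hb0. apply Rmult_integral in Hb0.
    destruct Hb0 as [Hc0|Hc0].
    + unfold c, Rdiv in Hc0. apply Rmult_integral in Hc0. destruct Hc0 as [Hc0|Hc0]; auto.
      exfalso. pose proof (INR_fact_ge1 m). apply (Rinv_neq_0_compat (INR (Factorial.fact m))); auto. lra.
    + exfalso. apply (Rinv_neq_0_compat (2 * D)); auto. lra.
  - pose proof (bigO_plus _ _ _ (bigO_weaken _ (2 * m + 1) _ Hc ltac:(lia))
                              (bigO_weaken _ (2 * m + 1) _ Hsq ltac:(lia))) as Hsum.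
    eapply bigO_ext; [exact Hsum|]. intros t Ht. cbv beta.
    replace (D + (sqrt (s t) - D)) with (sqrt (s t)) by ring. rewrite pow_2m. ring.
Qed.

Definition Hsum (g : nat * nat -> R -> R) (L : list (nat * nat)) (t : R) : R :=
  fold_right Rplus 0 (map (fun e => g e t) L).

Lemma Hsum_smooth g L : (forall e, In e L -> Smooth (g e) 0) -> Smooth (Hsum g L) 0.
Proof.
  induction L as [|e L IH]; intros H.
  - apply (Smooth_ext_all (fun _ => 0)); [apply Smooth_const|]. intros; reflexivity.
  - apply (Smooth_ext_all (fun t => g e t + Hsum g L t)).
    + apply Smooth_plus; [apply H; simpl; auto|]. apply IH. intros; apply H; simpl; auto.
    + intros; reflexivity.
Qed.

Lemma Hsum_A g L N : (forall e, In e L -> bigO N (fun t => g e t - g e 0)) ->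
  bigO N (fun t => Hsum g L t - Hsum g L 0).
Proof.
  induction L as [|e L IH]; intros H.
  - eapply bigO_ext; [apply (bigO_mon N 0)|]. intros t Ht. unfold Hsum; simpl. ring.
  - eapply bigO_ext.
    + apply (bigO_plus _ _ (fun t => Hsum g L t - Hsum g L 0) (H e (or_introl eq_refl))).
      apply IH. intros; apply H; simpl; auto.
    + intros t Ht. unfold Hsum; simpl. ring.
Qed.

Lemma Hsum_B g L N M (Q : nat * nat -> Prop) :
  (forall e, In e L -> exists A, 0 <= A /\ (A = 0 -> Q e) /\
      bigO N (fun t => g e t - g e 0 - A * t ^ M)) ->
  exists A, 0 <= A /\ (A = 0 -> forall e, In e L -> Q e) /\
      bigO N (fun t => Hsum g L t - Hsum g L 0 - A * t ^ M).
Proof.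
  induction L as [|e L IH]; intros H.
  - exists 0. split; [lra|]. split; [intros _ e []|].
    eapply bigO_ext; [apply (bigO_mon N 0)|]. intros t Ht. unfold Hsum; simpl. ring.
  - destruct (H e (or_introl eq_refl)) as [A1 [HA1 [HQ1 HO1]]].
    destruct IH as [A2 [HA2 [HQ2 HO2]]]; [intros; apply H; simpl; auto|].
    exists (A1 + A2). split; [lra|]. split.
    + intros HA e' [E|E]; [subst; apply HQ1; lra|]. apply HQ2; auto. lra.
    + eapply bigO_ext; [apply (bigO_plus _ _ _ HO1 HO2)|].
      intros t Ht. unfold Hsum; simpl. ring.
Qed.

Lemma sumn_R_ext m f g : (forall c, (c < m)%nat -> f c = g c) -> sumn_R m f = sumn_R m g.
Proof.
  induction m as [|m IH]; intros H; simpl; auto.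
  rewrite IH by (intros; apply H; lia). rewrite H by lia. auto.
Qed.

Lemma sumn_sq_nonneg m x : 0 <= sumn_R m (fun c => (x c) ^ 2).
Proof.
  induction m as [|m IH]; cbn [sumn_R]; [lra|]. pose proof (pow2_ge_0 (x m)). lra.
Qed.

Lemma sumn_sq_pos m x : (exists c, (c < m)%nat /\ x c <> 0) ->
  0 < sumn_R m (fun c => (x c) ^ 2).
Proof.
  induction m as [|m IH]; intros [c [Hc Hx]]; [lia|]. cbn [sumn_R].
  destruct (Nat.eq_dec c m).
  - subst. pose proof (sumn_sq_nonneg m x).
    assert (0 < x m ^ 2) by (simpl; rewrite Rmult_1_r; apply Rlt_0_sqr; auto). lra.
  - pose proof (pow2_ge_0 (x m)). assert (0 < sumn_R m (fun c => x c ^ 2)).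
    { apply IH. exists c. split; auto. lia. } lra.
Qed.

Lemma Smooth_sumn m (G : R -> nat -> R) x0 :
  (forall c, (c < m)%nat -> Smooth (fun t => G t c) x0) ->
  Smooth (fun t => sumn_R m (G t)) x0.
Proof.
  induction m as [|m IH]; intros H.
  - apply (Smooth_ext_all (fun _ => 0)); [apply Smooth_const|]. intros; reflexivity.
  - apply (Smooth_ext_all (fun t => sumn_R m (G t) + G t m)).
    + apply Smooth_plus; [apply IH; intros; apply H; lia|apply H; lia].
    + intros; reflexivity.
Qed.

Theorem theorem3p13 :
  forall (n d l : nat) (E : list (nat * nat)) (p : config)
         (Eb : nat -> nat -> R -> R) (P : R -> config) (j k : nat),
    framework n d E p ->
    pinned n d p l ->
    stiff_bar d E Eb p ->
    trajectory n d l p P ->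
    (flex n d l E p P j k <-> f_flex n d l p (energy d E Eb) P j (2 * k)) /\
    (f_flex n d l p (energy d E Eb) P j (2 * k) <->
     f_flex n d l p (energy d E Eb) P j (2 * k + 1)).
Proof.
  intros n d l E p Eb P j k Hfw Hpin Hsb Htraj.
  pose proof Htraj as Ht'.
  destruct Ht' as [eps [Heps [HP0 [_ [Han _]]]]].
  destruct Hfw as [[_ Hsg] Hne].
  set (sE := fun (e : nat * nat) t => sqdist d (P t (fst e)) (P t (snd e))).
  set (gE := fun (e : nat * nat) t => Eb (fst e) (snd e) (sqrt (sE e t))).
  assert (HsE0 : forall e, In e E -> sE e 0 = sqdist d (p (fst e)) (p (snd e))).
  { intros e He. destruct (Hsg e He) as [H1 H2]. unfold sE, sqdist.
    apply sumn_R_ext. intros c Hc. rewrite !HP0 by lia. auto. }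
  assert (Hpos : forall e, In e E -> 0 < sE e 0).
  { intros e He. rewrite HsE0 by auto. unfold sqdist.
    apply (sumn_sq_pos d (fun c => p (fst e) c - p (snd e) c)).
    destruct (Hne e He) as [c [Hc Hx]]. exists c. split; auto. lra. }
  assert (HsS : forall e, In e E -> Smooth (sE e) 0).
  { intros e He. destruct (Hsg e He) as [H1 H2]. unfold sE, sqdist.
    apply (Smooth_sumn d (fun t c => (P t (fst e) c - P t (snd e) c) ^ 2)).
    intros c Hc.
    assert (Ha : forall i, (i < n)%nat -> Smooth (fun t => P t i c) 0).
    { intros i Hi. apply Smooth_analytic. apply Han; auto. lra. }
    assert (Hw : Smooth (fun t => P t (fst e) c - P t (snd e) c) 0).
    { apply (Smooth_ext_all (fun t => P t (fst e) c + (-1) * P t (snd e) c)).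
      - apply Smooth_plus; [apply Ha; lia|]. apply Smooth_mult; [apply Smooth_const|apply Ha; lia].
      - intros; ring. }
    apply (Smooth_ext_all (fun t => (P t (fst e) c - P t (snd e) c) * (P t (fst e) c - P t (snd e) c))).
    - apply Smooth_mult; auto.
    - intros; ring. }
  assert (HEb : forall e, In e E ->
     Smooth (Eb (fst e) (snd e)) (sqrt (sE e 0)) /\
     Derive_n (Eb (fst e) (snd e)) 1 (sqrt (sE e 0)) = 0 /\
     0 < Derive_n (Eb (fst e) (snd e)) 2 (sqrt (sE e 0))).
  { intros e He. destruct (Hsb e He) as [A1 [A2 A3]].
    unfold Defs.dist in A1, A2, A3. rewrite <- (HsE0 e He) in A1, A2, A3.
    pose proof (Smooth_analytic _ _ A1) as HS.
    split; auto. split; [|lra]. apply deriv_min; auto. }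
  assert (HgS : forall e, In e E -> Smooth (gE e) 0).
  { intros e He. destruct (HEb e He) as [B1 _]. unfold gE.
    apply (Smooth_comp (Eb (fst e) (snd e)) (fun t => sqrt (sE e t))); auto.
    apply (Smooth_comp sqrt (sE e)); auto. apply Smooth_sqrt. auto. }
  assert (HhS : Smooth (Hsum gE E) 0) by (apply Hsum_smooth; auto).
  assert (K1 : (forall e, In e E -> k_vanishing (sE e) k) ->
               k_vanishing (Hsum gE E) (2 * k + 1)).
  { intros Hk. unfold k_vanishing. apply (uniqO _ (2 * k + 1) HhS).
    apply (bigO_weaken (2 * k + 2)); [|lia].
    apply Hsum_A. intros e He. destruct (HEb e He) as [B1 [B2 B3]].
    apply (edge_A (sE e) (Eb (fst e) (snd e)) k); auto. exact (Hk e He). }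
  assert (K2 : k_vanishing (Hsum gE E) (2 * k) ->
               forall e, In e E -> k_vanishing (sE e) k).
  { intros Hh.
    assert (Hall : forall J i, (i <= J)%nat -> (1 <= i <= k)%nat ->
              forall e, In e E -> Derive_n (sE e) i 0 = 0).
    { induction J as [|J IH]; intros i HiJ Hi; [lia|].
      destruct (Nat.eq_dec i (S J)); [|apply IH; lia]. subst i.
      destruct (Hsum_B gE E (2 * S J + 1) (2 * S J)
                  (fun e => Derive_n (sE e) (S J) 0 = 0)) as [A [HA [HQ HO]]].
      { intros e He. destruct (HEb e He) as [B1 [B2 B3]].
        apply (edge_B (sE e) (Eb (fst e) (snd e)) (S J)); auto; [lia|].
        intros i Hi'. apply IH; auto; lia. }
      apply HQ.
      pose proof (flatO _ (2 * S J) HhS ltac:(intros i Hi'; apply Hh; lia)) as HF.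
      apply (bigO_coef0 (2 * S J)).
      eapply bigO_ext; [apply (bigO_minus _ _ _ HF (bigO_weaken _ (S (2 * S J)) _ HO ltac:(lia)))|].
      intros t Ht. cbv beta. ring. }
    intros e He i Hi. apply (Hall i i); auto. }
  assert (K3 : k_vanishing (Hsum gE E) (2 * k + 1) -> k_vanishing (Hsum gE E) (2 * k)).
  { intros H i Hi. apply H. lia. }
  unfold flex, f_flex.
  change (fun t => energy d E Eb (P t)) with (Hsum gE E).
  change (forall e, In e E -> k_vanishing (sE e) k) with
    (forall e, In e E -> k_vanishing (fun t => sqdist d (P t (fst e)) (P t (snd e))) k).
  split; split; intros [T1 [T2 T3]]; split; auto; split; auto.
  all: first [ exact (K2 T3) | exact (K3 (K1 T3)) | exact (K1 (K2 T3)) | exact (K3 T3) ].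
Qed.
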